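(* Let $\gamma\in V$ be an element of infinite order. Then there is a non-empty open $\gamma$-wandering subset of $S^1$.
   Context: $S^1$ is the interval $[0,1]$ with $0$ and $1$ identified. Thompson's group $V$ is the group of left-continuous bijections of $S^1$ which map finite dyadic fractions to finite dyadic fractions, are differentiable except at finitely many finite dyadic fractions, and on each maximal interval of differentiability are linear with slope an integer power of $2$. For $\gamma\in V$, a subset $U\subseteq S^1$ is $\gamma$-wandering if for every $n\in\mathbb{Z}$ with $\gamma^n\neq e$ we have $\gamma^n(U)\cap U=\emptyset$. *)

(* Defs.v *)
From Stdlib Require Import Reals ZArith Lra.
Open Scope R_scope.

(* S^1 = [0,1] with 0 ~ 1, represented by the fundamental domain (0,1]
   (the point 1 stands for 0 = 1); left-continuity is natural on (0,1]. *)
Definition S1 (x : R) : Prop := 0 < x <= 1.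

Definition dyadic (x : R) : Prop :=
  exists (k : Z) (n : nat), x = IZR k / 2 ^ n.

Definition cdist (x y : R) : R := Rmin (Rabs (x - y)) (1 - Rabs (x - y)).

Definition S1_open (U : R -> Prop) : Prop :=
  (forall x, U x -> S1 x) /\
  (forall x, U x -> exists eps, 0 < eps /\
      forall y, S1 y -> cdist x y < eps -> U y).

(* Thompson's group V: left-continuous bijections of S^1 mapping dyadics to
   dyadics, and affine with slope 2^k on finitely many pieces
   (a_i, a_{i+1}] cut at dyadic points 0 = a_0 < ... < a_n = 1.
   (Affine on half-open pieces (a_i,a_{i+1}] is exactly: differentiable off
   finitely many dyadic points, linear with slope a power of 2 on each
   maximal interval of differentiability, and left-continuous.) *)
Definition in_V (g : R -> R) : Prop :=
  (forall x, S1 x -> S1 (g x)) /\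
  (forall x y, S1 x -> S1 y -> g x = g y -> x = y) /\
  (forall y, S1 y -> exists x, S1 x /\ g x = y) /\
  (forall x, S1 x -> dyadic x -> dyadic (g x)) /\
  exists (n : nat) (a : nat -> R) (k : nat -> Z) (b : nat -> R),
    a 0%nat = 0 /\ a n = 1 /\
    (forall i, (i <= n)%nat -> dyadic (a i)) /\
    (forall i, (i < n)%nat -> a i < a (S i)) /\
    (forall i x, (i < n)%nat -> a i < x <= a (S i) ->
        g x = powerRZ 2 (k i) * x + b i).

(* gamma^n <> e in V, for n : Z (gamma^(-m) = e iff gamma^m = e) *)
Definition zpow_ne_id (g : R -> R) (n : Z) : Prop :=
  match n with
  | Z0 => False
  | Zpos p | Zneg p => exists x, S1 x /\ Nat.iter (Pos.to_nat p) g x <> x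
  end.

Definition zimage (g : R -> R) (n : Z) (U : R -> Prop) : R -> Prop :=
  match n with
  | Z0 => U
  | Zpos p => fun y => exists x, S1 x /\ U x /\ Nat.iter (Pos.to_nat p) g x = y
  | Zneg p => fun y => S1 y /\ U (Nat.iter (Pos.to_nat p) g y)
  end.

Definition wandering (g : R -> R) (U : R -> Prop) : Prop :=
  forall n : Z, zpow_ne_id g n -> forall x, ~ (zimage g n U x /\ U x).

Definition infinite_order (g : R -> R) : Prop :=
  forall m : nat, (0 < m)%nat -> exists x, S1 x /\ Nat.iter m g x <> x.

(* Main.v *)
Require Import Defs.
From Stdlib Require Import Reals ZArith Lra Lia Classical ClassicalEpsilon.
Open Scope R_scope.

Definition p2 (l : Z) : R := powerRZ 2 l.

Lemma p2_pos l : 0 < p2 l.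
Proof. unfold p2; apply powerRZ_lt; lra. Qed.

Lemma p2_add a b : p2 (a + b) = p2 a * p2 b.
Proof. unfold p2; apply powerRZ_add; lra. Qed.

Lemma p2_nat d : (0 <= d)%Z -> p2 d = IZR (2 ^ d).
Proof.
  intros Hd. unfold p2. rewrite <- (Z2Nat.id d Hd).
  rewrite <- pow_powerRZ. rewrite pow_IZR. reflexivity.
Qed.

Lemma p2_0 : p2 0 = 1.
Proof. reflexivity. Qed.

Lemma pow2_pos d : (0 <= d)%Z -> (0 < 2 ^ d)%Z.
Proof. intros; apply Z.pow_pos_nonneg; lia. Qed.

Definition code := (Z * Z)%type.
Definition lev (c : code) := fst c.
Definition idx (c : code) := snd c.

Definition std (c : code) (x : R) : Prop :=
  IZR (idx c) < x * p2 (lev c) <= IZR (idx c) + 1.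

Definition AS (f : R -> R) (c c' : code) : Prop :=
  forall x, std c x -> f x * p2 (lev c') = x * p2 (lev c) + IZR (idx c' - idx c).

Definition setsub (c c' : code) := forall y, std c y -> std c' y.
Definition sub (c c' : code) := (lev c' <= lev c)%Z /\ setsub c c'.

Lemma IZR_lt_plus1 a b : IZR a < IZR b + 1 -> (a <= b)%Z.
Proof. intros H. rewrite <- plus_IZR in H. apply lt_IZR in H. lia. Qed.

Lemma std_witness c : std c ((IZR (idx c) + 1) / p2 (lev c)).
Proof.
  unfold std. pose proof (p2_pos (lev c)).
  replace ((IZR (idx c) + 1) / p2 (lev c) * p2 (lev c)) with (IZR (idx c) + 1)
    by (field; lra). lra.
Qed.

Lemma nest c1 c2 x : std c1 x -> std c2 x -> (lev c1 <= lev c2)%Z -> setsub c2 c1.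
Proof.
  destruct c1 as [l1 j1], c2 as [l2 j2]; unfold std, setsub, lev, idx; simpl.
  intros H1 H2 Hl y Hy.
  set (d := (l2 - l1)%Z).
  assert (Hd : (0 <= d)%Z) by (unfold d; lia).
  assert (E : l2 = (l1 + d)%Z) by (unfold d; lia).
  unfold std, lev, idx in Hy |- *; simpl in Hy |- *. rewrite E in H2, Hy. rewrite p2_add in H2. rewrite p2_add in Hy.
  rewrite (p2_nat d Hd) in H2, Hy.
  pose proof (pow2_pos d Hd) as HD.
  set (D := (2 ^ d)%Z) in *.
  pose proof (p2_pos l1).
  assert (HDr : 0 < IZR D) by (apply IZR_lt; lia).
  assert (A1 : IZR (j1 * D) < IZR j2 + 1).
  { rewrite mult_IZR. nra. }
  assert (A2 : IZR j2 < IZR ((j1 + 1) * D)).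
  { rewrite mult_IZR, plus_IZR. nra. }
  apply IZR_lt_plus1 in A1. apply lt_IZR in A2.
  assert (B1 : IZR j1 * IZR D <= IZR j2) by (rewrite <- mult_IZR; apply IZR_le; lia).
  assert (B2 : IZR j2 + 1 <= (IZR j1 + 1) * IZR D).
  { rewrite <- plus_IZR. replace (IZR j1 + 1) with (IZR (j1 + 1)) by (rewrite plus_IZR; reflexivity).
    rewrite <- mult_IZR. apply IZR_le; lia. }
  split; nra.
Qed.

Lemma same_level c1 c2 x : std c1 x -> std c2 x -> lev c1 = lev c2 -> c1 = c2.
Proof.
  destruct c1 as [l1 j1], c2 as [l2 j2]; unfold std, lev, idx; simpl.
  intros H1 H2 E. subst l2.
  assert (A1 : IZR j1 < IZR j2 + 1) by lra.
  assert (A2 : IZR j2 < IZR j1 + 1) by lra.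
  apply IZR_lt_plus1 in A1; apply IZR_lt_plus1 in A2.
  f_equal; lia.
Qed.

Lemma trich c1 c2 x : std c1 x -> std c2 x ->
  c1 = c2 \/ ((lev c1 < lev c2)%Z /\ sub c2 c1) \/ ((lev c2 < lev c1)%Z /\ sub c1 c2).
Proof.
  intros H1 H2. destruct (Z.lt_total (lev c1) (lev c2)) as [Hl|[Hl|Hl]].
  - right; left. split; auto. split; [lia|]. eapply nest; eauto; lia.
  - left. eapply same_level; eauto.
  - right; right. split; auto. split; [lia|]. eapply nest; eauto; lia.
Qed.

Definition half0 (c : code) : code := ((lev c + 1)%Z, (2 * idx c)%Z).
Definition half1 (c : code) : code := ((lev c + 1)%Z, (2 * idx c + 1)%Z).

Lemma halves c y : std c y -> std (half0 c) y \/ std (half1 c) y.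
Proof.
  destruct c as [l j]; unfold std, half0, half1, lev, idx; cbn [fst snd].
  rewrite p2_add. replace (p2 1) with 2 by (unfold p2; simpl; ring).
  rewrite !plus_IZR, !mult_IZR. intros H.
  destruct (Rle_dec (y * (p2 l * 2)) (2 * IZR j + 1)); [left|right]; lra.
Qed.

Lemma half_in c y : std (half0 c) y \/ std (half1 c) y -> std c y.
Proof.
  destruct c as [l j]; unfold std, half0, half1, lev, idx; cbn [fst snd].
  rewrite p2_add. replace (p2 1) with 2 by (unfold p2; simpl; ring).
  rewrite !plus_IZR, !mult_IZR. intros [H|H]; lra.
Qed.

Lemma half_disj c y : std (half0 c) y -> std (half1 c) y -> False.
Proof.
  intros H0 H1. pose proof (same_level _ _ _ H0 H1 eq_refl).
  unfold half0, half1 in H; inversion H; lia.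
Qed.

Lemma strict_half c2 c1 : (lev c1 < lev c2)%Z -> sub c2 c1 ->
  setsub c2 (half0 c1) \/ setsub c2 (half1 c1).
Proof.
  intros Hl [_ Hs].
  pose proof (std_witness c2) as W. set (x := (IZR (idx c2) + 1) / p2 (lev c2)) in *.
  destruct (halves c1 x (Hs x W)) as [H|H]; [left|right];
    eapply nest; eauto; unfold half0, half1, lev in *; simpl; lia.
Qed.

Lemma strict_not_eq c2 c1 : (lev c1 < lev c2)%Z -> sub c2 c1 -> exists z, std c1 z /\ ~ std c2 z.
Proof.
  intros Hl Hs. destruct (strict_half c2 c1 Hl Hs) as [H|H].
  - exists ((IZR (idx (half1 c1)) + 1) / p2 (lev (half1 c1))).
    pose proof (std_witness (half1 c1)). split. apply half_in; auto.
    intros Hc. apply H in Hc. eapply half_disj; eauto.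
  - exists ((IZR (idx (half0 c1)) + 1) / p2 (lev (half0 c1))).
    pose proof (std_witness (half0 c1)). split. apply half_in; auto.
    intros Hc. apply H in Hc. eapply half_disj; eauto.
Qed.

Lemma AS_into f c c' x : AS f c c' -> std c x -> std c' (f x).
Proof.
  intros H Hx. pose proof (H x Hx) as E. unfold std in *.
  rewrite E, minus_IZR. lra.
Qed.

Lemma AS_onto f c c' y : AS f c c' -> std c' y -> exists x, std c x /\ f x = y.
Proof.
  intros H Hy. pose proof (p2_pos (lev c)). pose proof (p2_pos (lev c')).
  set (x := (y * p2 (lev c') - IZR (idx c' - idx c)) / p2 (lev c)).
  assert (Ex : x * p2 (lev c) = y * p2 (lev c') - IZR (idx c' - idx c)) by (unfold x; field; lra).
  assert (Hx : std c x) by (unfold std in *; rewrite Ex, minus_IZR; lra).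
  exists x; split; auto.
  pose proof (H x Hx) as E. rewrite Ex in E.
  apply Rmult_eq_reg_r with (p2 (lev c')); lra.
Qed.

Lemma AS_comp f h c1 c2 c3 : AS f c1 c2 -> AS h c2 c3 -> AS (fun x => h (f x)) c1 c3.
Proof.
  intros H1 H2 x Hx. rewrite (H2 (f x) (AS_into _ _ _ _ H1 Hx)), (H1 x Hx).
  rewrite !minus_IZR. ring.
Qed.

Lemma AS_id f c x : AS f c c -> std c x -> f x = x.
Proof.
  intros H Hx. pose proof (H x Hx) as E. rewrite Z.sub_diag in E.
  pose proof (p2_pos (lev c)). apply Rmult_eq_reg_r with (p2 (lev c)); lra.
Qed.

Lemma AS_inv f h c c' : AS f c c' -> (forall x, std c x -> h (f x) = x) -> AS h c' c.
Proof.
  intros H Hh y Hy. destruct (AS_onto _ _ _ _ H Hy) as [x [Hx <-]].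
  rewrite (Hh x Hx). rewrite (H x Hx), !minus_IZR. ring.
Qed.

Lemma AS_sub f c1 c1' c : AS f c1 c1' -> sub c c1 -> exists c', AS f c c' /\ sub c' c1'.
Proof.
  intros H [Hl Hs].
  set (d := (lev c - lev c1)%Z).
  assert (Hd : (0 <= d)%Z) by (unfold d; lia).
  exists ((lev c1' + d)%Z, (idx c + (idx c1' - idx c1) * 2 ^ d)%Z).
  assert (HA : AS f c ((lev c1' + d)%Z, (idx c + (idx c1' - idx c1) * 2 ^ d)%Z)).
  { intros x Hx. unfold lev at 1, idx at 1. cbn [fst snd].
    rewrite p2_add. replace (f x * (p2 (lev c1') * p2 d)) with ((f x * p2 (lev c1')) * p2 d) by ring.
    rewrite (H x (Hs x Hx)).
    replace (lev c) with (lev c1 + d)%Z by (unfold d; lia).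
    rewrite p2_add, (p2_nat d Hd).
    unfold idx at 3; cbn [snd].
    replace (idx c + (idx c1' - idx c1) * 2 ^ d - idx c)%Z with ((idx c1' - idx c1) * 2 ^ d)%Z by ring.
    rewrite mult_IZR. ring. }
  split; auto. split.
  - unfold lev; cbn [fst]. lia.
  - intros y Hy. destruct (AS_onto _ _ _ _ HA Hy) as [x [Hx <-]].
    apply (AS_into _ _ _ _ H), Hs, Hx.
Qed.

Lemma iter_S {A} (f : A -> A) n x : Nat.iter (S n) f x = f (Nat.iter n f x).
Proof. reflexivity. Qed.

Lemma iter_comm {A} (f : A -> A) a b x : Nat.iter a f (Nat.iter b f x) = Nat.iter b f (Nat.iter a f x).
Proof. rewrite <- !Nat.iter_add. f_equal. lia. Qed.

Lemma AS_chain f (I : nat -> code) n t :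
  (forall s, (n <= s < n + t)%nat -> AS f (I s) (I (S s))) -> AS (Nat.iter t f) (I n) (I (n + t)%nat).
Proof.
  induction t; intros H.
  - rewrite Nat.add_0_r. intros x Hx. simpl. rewrite Z.sub_diag. simpl. ring.
  - replace (n + S t)%nat with (S (n + t)) by lia.
    apply (AS_comp (Nat.iter t f) f _ (I (n + t)%nat)).
    + apply IHt. intros s Hs. apply H. lia.
    + apply H. lia.
Qed.

Definition interior (c : code) (y : R) :=
  IZR (idx c) / p2 (lev c) < y < (IZR (idx c) + 1) / p2 (lev c).

Lemma interior_std c y : interior c y -> std c y.
Proof.
  unfold interior, std. pose proof (p2_pos (lev c)). intros [H1 H2].
  apply Rmult_lt_compat_r with (r := p2 (lev c)) in H1; auto.
  apply Rmult_lt_compat_r with (r := p2 (lev c)) in H2; auto.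
  replace (IZR (idx c) / p2 (lev c) * p2 (lev c)) with (IZR (idx c)) in H1 by (field; lra).
  replace ((IZR (idx c) + 1) / p2 (lev c) * p2 (lev c)) with (IZR (idx c) + 1) in H2 by (field; lra).
  lra.
Qed.

Lemma interior_lt c : IZR (idx c) / p2 (lev c) < (IZR (idx c) + 1) / p2 (lev c).
Proof.
  pose proof (p2_pos (lev c)). unfold Rdiv. apply Rmult_lt_compat_r.
  apply Rinv_0_lt_compat; auto. lra.
Qed.

Lemma lev_nonneg c : (forall y, std c y -> S1 y) -> (0 <= lev c)%Z.
Proof.
  intros H. destruct (Z_lt_le_dec (lev c) 0) as [Hl|Hl]; auto. exfalso.
  pose proof (p2_pos (lev c)) as Hp.
  assert (Hp2 : p2 (lev c) * p2 (- lev c) = 1).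
  { rewrite <- p2_add. replace (lev c + - lev c)%Z with 0%Z by lia. reflexivity. }
  assert (Hq : 2 <= p2 (- lev c)).
  { rewrite p2_nat by lia. apply IZR_le.
    replace 2%Z with (2 ^ 1)%Z at 1 by reflexivity. apply Z.pow_le_mono_r; lia. }
  assert (Hh : p2 (lev c) <= 1/2).
  { pose proof (p2_pos (- lev c)). apply Rmult_le_reg_r with (p2 (- lev c)); auto.
    rewrite Hp2. lra. }
  set (x1 := (IZR (idx c) + 1) / p2 (lev c)).
  assert (E1 : x1 * p2 (lev c) = IZR (idx c) + 1) by (unfold x1; field; lra).
  assert (S1a : S1 x1) by (apply H; unfold std; lra).
  assert (S1b : S1 (x1 - 1)).
  { apply H. unfold std. rewrite Rmult_minus_distr_r, E1. lra. }
  unfold S1 in *; lra.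
Qed.

Lemma min_nat (P : nat -> Prop) : (exists n, P n) -> exists n, P n /\ forall m, (m < n)%nat -> ~ P m.
Proof.
  intros [n Hn]. revert Hn. induction n as [n IH] using (well_founded_induction lt_wf).
  intros Hn. destruct (classic (exists m, (m < n)%nat /\ P m)) as [[m [Hm Pm]]|Hno].
  - apply (IH m Hm Pm).
  - exists n; split; auto. intros m Hm Pm. apply Hno; eauto.
Qed.

Section Core.
Variable f : R -> R.
Variable I : nat -> code.
Hypothesis HAS : forall t, AS f (I t) (I (S t)).
Hypothesis HS1 : forall t y, std (I t) y -> S1 y.

Lemma into_iter n i y : std (I n) y -> std (I (n + i)%nat) (Nat.iter i f y).
Proof.
  intros Hy. apply (AS_into _ _ _ _ (AS_chain f I n i (fun s _ => HAS s)) Hy).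
Qed.

Lemma onto_iter n i y : std (I (n + i)%nat) y -> exists x, std (I n) x /\ Nat.iter i f x = y.
Proof.
  intros Hy. apply (AS_onto _ _ _ _ (AS_chain f I n i (fun s _ => HAS s)) Hy).
Qed.

Lemma shift a b t : setsub (I a) (I b) -> setsub (I (a + t)%nat) (I (b + t)%nat).
Proof.
  intros H y Hy. destruct (onto_iter a t y Hy) as [x [Hx <-]].
  apply into_iter, H, Hx.
Qed.

Lemma core :
  (exists al be, al < be /\ (forall y, al < y < be -> S1 y) /\
      forall i y, (1 <= i)%nat -> al < y < be -> al < Nat.iter i f y < be -> False)
  \/ (exists n d, (1 <= d)%nat /\ I n = I (n + d)%nat).
Proof.
  destruct (classic (exists d, (1 <= d)%nat /\ exists n y, std (I n) y /\ std (I (n + d)%nat) y))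
    as [Hex|Hno].
  2:{ left. exists (IZR (idx (I 0%nat)) / p2 (lev (I 0%nat))), ((IZR (idx (I 0%nat)) + 1) / p2 (lev (I 0%nat))).
      split; [apply interior_lt|]. split.
      - intros y Hy. apply (HS1 0%nat), interior_std, Hy.
      - intros i y Hi Hy Hz. apply Hno. exists i; split; auto. exists 0%nat, (Nat.iter i f y).
        split. apply interior_std, Hz. apply into_iter, interior_std, Hy. }
  apply min_nat in Hex. destruct Hex as [p [[Hp1 [n [y [Hy1 Hy2]]]] Hmin]].
  destruct (trich _ _ _ Hy1 Hy2) as [Heq|[[Hl Hs]|[Hl Hs]]].
  - right. exists n, p. auto.
  -
    assert (Hmono : forall q r, setsub (I (n + q * p + r)%nat) (I (n + r)%nat)).
    { induction q; intros r.
      - replace (n + 0 * p + r)%nat with (n + r)%nat by lia. intros z Hz; exact Hz.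
      - intros z Hz. apply (IHq r).
        replace (n + q * p + r)%nat with (n + (q * p + r))%nat by lia.
        apply (shift (n + p) n (q * p + r)). apply Hs.
        replace (n + p + (q * p + r))%nat with (n + S q * p + r)%nat by lia. exact Hz. }
    assert (Hsub : setsub (I (n + p)%nat) (half0 (I n)) \/ setsub (I (n + p)%nat) (half1 (I n)))
      by (apply strict_half; auto).
    assert (Hgen : forall H H', (forall z, std H z -> std H' z -> False) ->
               setsub (I (n + p)%nat) H -> setsub H' (I n) ->
               (exists al be, al < be /\ (forall y, al < y < be -> S1 y) /\
                 forall i y, (1 <= i)%nat -> al < y < be -> al < Nat.iter i f y < be -> False)).
    { intros H H' Hdisj HH HH'.
      exists (IZR (idx H') / p2 (lev H')), ((IZR (idx H') + 1) / p2 (lev H')).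
      split; [apply interior_lt|]. split.
      - intros z Hz. apply (HS1 n), HH', interior_std, Hz.
      - intros i z Hi Hz Hiz. fold (interior H' z) in Hz. fold (interior H' (Nat.iter i f z)) in Hiz.
        apply interior_std in Hz, Hiz.
        pose proof (into_iter n i z (HH' z Hz)) as Hi1.
        pose proof (Nat.div_mod i p ltac:(lia)) as Hdm.
        pose proof (Nat.mod_upper_bound i p ltac:(lia)) as Hmb.
        set (q := (i / p)%nat) in *. set (r := (i mod p)%nat) in *.
        destruct (Nat.eq_dec r 0) as [Hr|Hr].
        + assert (Hq : (1 <= q)%nat) by (destruct q; lia).
          apply (Hdisj (Nat.iter i f z)); auto. apply HH.
          apply (Hmono (q - 1)%nat p). replace (n + (q - 1) * p + p)%nat with (n + i)%nat by nia. exact Hi1.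
        + apply (Hmin r ltac:(lia)). split; [lia|]. exists n, (Nat.iter i f z). split.
          * apply HH', Hiz.
          * apply (Hmono q r). replace (n + q * p + r)%nat with (n + i)%nat by lia. exact Hi1. }
    left. destruct Hsub as [Hsub|Hsub].
    + apply (Hgen (half0 (I n)) (half1 (I n))); auto.
      * intros z A B; eapply half_disj; eauto.
      * intros z Hz; apply half_in; auto.
    + apply (Hgen (half1 (I n)) (half0 (I n))); auto.
      * intros z A B; eapply half_disj; eauto.
      * intros z Hz; apply half_in; auto.
  -
    destruct Hs as [_ Hs].
    assert (Hq : forall q, (exists n' d, (1 <= d)%nat /\ I n' = I (n' + d)%nat) \/
               ((lev (I (n + q * p)%nat) <= lev (I n) - Z.of_nat q)%Z /\ setsub (I n) (I (n + q * p)%nat))).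
    { induction q.
      - right. replace (n + 0 * p)%nat with n by lia. split; [lia|]. intros z Hz; exact Hz.
      - destruct IHq as [IH|[IHl IHs]]; [left; exact IH|].
        assert (Hsh : setsub (I (n + q * p)%nat) (I (n + q * p + p)%nat)).
        { intros z Hz. replace (n + q * p + p)%nat with (n + p + q * p)%nat by lia.
          apply (shift n (n + p) (q * p)); auto. }
        assert (HS' : setsub (I n) (I (n + S q * p)%nat)).
        { intros z Hz. replace (n + S q * p)%nat with (n + q * p + p)%nat by lia. auto. }
        pose proof (std_witness (I n)) as Hw.
        set (w := (IZR (idx (I n)) + 1) / p2 (lev (I n))) in *.
        destruct (trich _ _ _ (IHs w Hw) (Hsh w (IHs w Hw))) as [E|[[Hl2 Hs2]|[Hl2 Hs2]]].
        + left. exists (n + q * p)%nat, p. split; auto.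
        + exfalso. destruct (strict_not_eq _ _ Hl2 Hs2) as [z [Hz1 Hz2]]. apply Hz2, Hsh, Hz1.
        + right. split; auto.
          replace (n + S q * p)%nat with (n + q * p + p)%nat by lia. lia. }
    destruct (Hq (S (Z.to_nat (lev (I n))))) as [H|[H _]]; [right; exact H|].
    exfalso. pose proof (lev_nonneg (I n) (HS1 n)).
    pose proof (lev_nonneg _ (HS1 (n + S (Z.to_nat (lev (I n))) * p)%nat)). lia.
Qed.
End Core.

Lemma wand_of g al be : al < be -> (forall y, al < y < be -> S1 y) ->
  (forall i y, (1 <= i)%nat -> al < y < be -> al < Nat.iter i g y < be -> False) ->
  exists U, S1_open U /\ (exists x, U x) /\ wandering g U.
Proof.
  intros Hab HS Hw.
  assert (Ha : 0 <= al).
  { destruct (Rle_dec 0 al) as [h|h]; auto. exfalso.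
    assert (S1 ((al + Rmin be 0) / 2)).
    { apply HS. unfold Rmin; destruct (Rle_dec be 0); lra. }
    unfold S1, Rmin in *; destruct (Rle_dec be 0); lra. }
  assert (Hb : be <= 1).
  { destruct (Rle_dec be 1) as [h|h]; auto. exfalso.
    assert (S1 ((Rmax al 1 + be) / 2)).
    { apply HS. unfold Rmax; destruct (Rle_dec al 1); lra. }
    unfold S1, Rmax in *; destruct (Rle_dec al 1); lra. }
  exists (fun y => al < y < be). split; [|split].
  - split; auto. intros x Hx. exists (Rmin (x - al) (be - x)). split.
    + unfold Rmin; destruct (Rle_dec (x - al) (be - x)); lra.
    + intros y Hy Hd. unfold cdist, S1 in *.
      unfold Rmin in *. destruct (Rle_dec (x - al) (be - x));
      destruct (Rle_dec (Rabs (x - y)) (1 - Rabs (x - y)));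
      unfold Rabs in *; destruct (Rcase_abs (x - y)); lra.
  - exists ((al + be) / 2). lra.
  - intros n Hn x [Hx1 Hx2]. destruct n as [|p|p]; simpl in Hn, Hx1.
    + exact Hn.
    + destruct Hx1 as [x0 [_ [Hx0 E]]]. apply (Hw (Pos.to_nat p) x0); [lia| auto | rewrite E; auto].
    + destruct Hx1 as [_ Hx1]. apply (Hw (Pos.to_nat p) x); [lia|auto|auto].
Qed.

Definition isint (y : R) := exists z, y = IZR z.

Lemma isint_up y m m' : isint (y * p2 m) -> (m <= m')%Z -> isint (y * p2 m').
Proof.
  intros [z Hz] H. exists (z * 2 ^ (m' - m))%Z.
  replace (p2 m') with (p2 m * p2 (m' - m)) by (rewrite <- p2_add; f_equal; lia).
  rewrite (p2_nat (m' - m)) by lia.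
  rewrite mult_IZR, <- Hz. ring.
Qed.

Lemma dyadic_isint x : dyadic x -> exists m, isint (x * p2 m).
Proof.
  intros [k [n E]]. exists (Z.of_nat n). exists k. unfold p2. rewrite <- pow_powerRZ, E.
  field. apply pow_nonzero; lra.
Qed.

Lemma isint_sub u v : isint u -> isint v -> isint (u - v).
Proof. intros [a Ha] [b Hb]. exists (a - b)%Z. rewrite minus_IZR; subst; auto. Qed.

Lemma max_lemma (P : nat -> Z -> Prop) N :
  (forall i l l', P i l -> (l <= l')%Z -> P i l') -> (forall i, (i < N)%nat -> exists l, P i l) ->
  exists L, (0 <= L)%Z /\ forall i, (i < N)%nat -> P i L.
Proof.
  intros Hmono. induction N; intros H.
  - exists 0%Z; split; [lia|]; intros; lia.
  - destruct IHN as [L [HL0 HL]]. { intros i Hi; apply H; lia. }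
    destruct (H N ltac:(lia)) as [l Hl].
    exists (Z.max L l). split; [lia|]. intros i Hi.
    destruct (Nat.eq_dec i N) as [->|Hne].
    + eapply Hmono; eauto; lia.
    + eapply Hmono; [apply HL; lia| lia].
Qed.

Lemma step_exists g : in_V g -> exists L, (0 <= L)%Z /\
  forall c, (L <= lev c)%Z -> (forall y, std c y -> S1 y) ->
    exists c', AS g c c' /\ (forall y, std c' y -> S1 y).
Proof.
  intros [HS1 [Hinj [Hsurj [Hdy [n [a [k [b [Ha0 [Han [Hady [Hinc Haff]]]]]]]]]]]].
  assert (Hmon : forall i m, (i <= m <= n)%nat -> a i <= a m).
  { intros i m. induction m; intros Hm.
    - replace i with 0%nat by lia. lra.
    - destruct (Nat.eq_dec i (S m)) as [->|Hne]; [lra|].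
      pose proof (Hinc m ltac:(lia)). pose proof (IHm ltac:(lia)). lra. }
  assert (Hpiece : forall x, 0 < x <= 1 -> exists i, (i < n)%nat /\ a i < x <= a (S i)).
  { intros x Hx. assert (G : forall m, (m <= n)%nat -> x <= a m -> exists i, (i < m)%nat /\ a i < x <= a (S i)).
    { induction m; intros Hm Hxm.
      - rewrite Ha0 in Hxm; lra.
      - destruct (Rle_dec x (a m)) as [h|h].
        + destruct (IHm ltac:(lia) h) as [i [Hi Hi2]]. exists i; split; auto; lia.
        + exists m; split; [lia|lra]. }
    destruct (G n (le_n n) ltac:(rewrite Han; lra)) as [i [Hi Hi2]]. exists i; auto. }
  assert (HaS1 : forall i, (0 < i <= n)%nat -> S1 (a i)).
  { intros i Hi. split.
    - pose proof (Hinc 0%nat ltac:(lia)). pose proof (Hmon 1%nat i ltac:(lia)). lra.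
    - rewrite <- Han. apply Hmon; lia. }
  set (P := fun (i : nat) (L : Z) => isint (a i * p2 L) /\
              ((i < n)%nat -> forall l, (L <= l)%Z -> isint (b i * p2 (l - k i)))).
  destruct (max_lemma P (S n)) as [L [HL0 HL]].
  { intros i l l' [H1 H2] Hll. split.
    - eapply isint_up; eauto.
    - intros Hi m Hm. apply H2; auto; lia. }
  { intros i Hi. destruct (dyadic_isint (a i) (Hady i ltac:(lia))) as [e1 He1].
    destruct (Nat.lt_ge_cases i n) as [Hin|Hin].
    - assert (Hb : b i = g (a (S i)) - p2 (k i) * a (S i)).
      { rewrite (Haff i (a (S i)) Hin) by (pose proof (Hinc i Hin); lra). unfold p2; ring. }
      destruct (dyadic_isint (g (a (S i)))) as [e2 He2].
      { apply Hdy. apply HaS1; lia. apply Hady; lia. }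
      destruct (dyadic_isint (a (S i)) (Hady (S i) ltac:(lia))) as [e3 He3].
      exists (Z.max e1 (Z.max e2 (e3 - k i) + k i))%Z. split.
      + eapply isint_up; eauto; lia.
      + intros _ l Hl. rewrite Hb. rewrite Rmult_minus_distr_r. apply isint_sub.
        * eapply isint_up; eauto; lia.
        * replace (p2 (k i) * a (S i) * p2 (l - k i)) with (a (S i) * p2 l).
          eapply isint_up; eauto; lia.
          replace l with (k i + (l - k i))%Z at 1 by lia. rewrite p2_add. ring.
    - exists e1. split; auto. intros; lia. }
  exists L. split; auto.
  intros [l j] Hl Hc. unfold lev in Hl; cbn [fst] in Hl.
  pose proof (std_witness (l, j)) as Hw.
  set (x1 := (IZR (idx (l, j)) + 1) / p2 (lev (l, j))) in *.
  assert (Ex1 : x1 * p2 l = IZR j + 1).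
  { unfold x1, lev, idx; cbn [fst snd]. pose proof (p2_pos l). field; lra. }
  destruct (Hpiece x1 (Hc x1 Hw)) as [i [Hi [Hai1 Hai2]]].
  destruct (HL i ltac:(lia)) as [HaL HbL].
  destruct (isint_up _ _ l HaL Hl) as [A HA].
  destruct (HbL Hi l Hl) as [B HB].
  pose proof (p2_pos l) as Hpl.
  assert (HAj : (A <= j)%Z).
  { apply IZR_lt_plus1. rewrite <- HA, <- Ex1. apply Rmult_lt_compat_r; auto. }
  assert (Hin : forall x, std (l, j) x -> a i < x <= a (S i)).
  { intros x Hx. unfold std, lev, idx in Hx; cbn [fst snd] in Hx. split.
    - apply Rmult_lt_reg_r with (p2 l); auto. rewrite HA.
      apply IZR_le in HAj. lra.
    - apply Rle_trans with x1; auto. apply Rmult_le_reg_r with (p2 l); auto. lra. }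
  exists ((l - k i)%Z, (j + B)%Z). split.
  - intros x Hx. unfold lev, idx; cbn [fst snd].
    rewrite (Haff i x Hi (Hin x Hx)).
    replace (j + B - j)%Z with B by ring. rewrite <- HB.
    replace (p2 l) with (p2 (k i) * p2 (l - k i)).
    unfold p2; ring. rewrite <- p2_add. f_equal; lia.
  - intros y Hy. assert (HAS : AS g (l, j) ((l - k i)%Z, (j + B)%Z)).
    { intros x Hx. unfold lev, idx; cbn [fst snd].
      rewrite (Haff i x Hi (Hin x Hx)).
      replace (j + B - j)%Z with B by ring. rewrite <- HB.
      replace (p2 l) with (p2 (k i) * p2 (l - k i)).
      unfold p2; ring. rewrite <- p2_add. f_equal; lia. }
    destruct (AS_onto _ _ _ _ HAS Hy) as [x [Hx <-]]. apply HS1, Hc, Hx.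
Qed.

Lemma pigeon N (f : nat -> Z) : (forall t, (t <= N)%nat -> (0 <= f t < Z.of_nat N)%Z) ->
  exists a b, (a < b <= N)%nat /\ f a = f b.
Proof.
  revert f. induction N; intros f Hf.
  - pose proof (Hf 0%nat (le_n 0)). lia.
  - destruct (classic (exists t, (t <= N)%nat /\ f t = f (S N))) as [[t [Ht E]]|Hne].
    + exists t, (S N). split; auto. lia.
    + set (v := f (S N)).
      set (f' := fun t => if Z.eq_dec (f t) (Z.of_nat N) then v else f t).
      destruct (IHN f') as [a [b [Hab E]]].
      { intros t Ht. unfold f'. pose proof (Hf t ltac:(lia)). pose proof (Hf (S N) (le_n _)).
        destruct (Z.eq_dec (f t) (Z.of_nat N)) as [e|e].
        - assert (v <> Z.of_nat N) by (intro; apply Hne; exists t; split; auto; unfold v in *; lia).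
          unfold v in *; lia.
        - lia. }
      exists a, b. split; [lia|]. unfold f' in E.
      destruct (Z.eq_dec (f a) (Z.of_nat N)), (Z.eq_dec (f b) (Z.of_nat N)); try lia.
      * exfalso; apply Hne; exists b; split; [lia|]; unfold v in E; lia.
      * exfalso; apply Hne; exists a; split; [lia|]; unfold v in E; lia.
Qed.

Lemma choice_fun {A B : Type} (P : A -> B -> Prop) : (forall a, exists b, P a b) -> exists f, forall a, P a (f a).
Proof.
  intros H. exists (fun a => proj1_sig (constructive_indefinite_description _ (H a))).
  intros a. apply (proj2_sig (constructive_indefinite_description _ (H a))).
Qed.

Lemma iter_S' {A} (f : A -> A) n x : Nat.iter (S n) f x = Nat.iter n f (f x).
Proof. replace (S n) with (n + 1)%nat by lia. rewrite Nat.iter_add. reflexivity. Qed.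

Lemma common_period (Q : nat -> nat -> Prop) N :
  (forall i P m, Q i P -> Q i (m * P)%nat) ->
  (forall i, (i < N)%nat -> exists P, (1 <= P)%nat /\ Q i P) ->
  exists P, (1 <= P)%nat /\ forall i, (i < N)%nat -> Q i P.
Proof.
  intros Hm. induction N; intros H.
  - exists 1%nat; split; [lia|]; intros; lia.
  - destruct IHN as [P [HP HQ]]. { intros i Hi; apply H; lia. }
    destruct (H N ltac:(lia)) as [P' [HP' HQ']].
    exists (P * P')%nat. split; [nia|]. intros i Hi.
    destruct (Nat.eq_dec i N) as [->|Hne].
    + apply Hm; auto.
    + rewrite Nat.mul_comm. apply Hm. apply HQ; lia.
Qed.

Lemma iter_mult (g : R -> R) P y : Nat.iter P g y = y -> forall m, Nat.iter (m * P) g y = y.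
Proof.
  intros H m. induction m; simpl; auto.
  rewrite Nat.iter_add, IHm, H; auto.
Qed.

Definition S1c (c : code) := forall y, std c y -> S1 y.

Lemma levelL_decomp L y : (0 <= L)%Z -> S1 y -> exists j, (0 <= j < 2 ^ L)%Z /\ std (L, j) y.
Proof.
  intros HL Hy. set (z := y * p2 L). destruct (archimed (- z)) as [A1 A2].
  exists (- up (- z))%Z.
  assert (Hs : std (L, (- up (- z))%Z) y).
  { unfold std, lev, idx; cbn [fst snd]. fold z. rewrite opp_IZR. lra. }
  split; auto.
  unfold std, lev, idx in Hs; cbn [fst snd] in Hs. fold z in Hs.
  pose proof (p2_pos L). pose proof (p2_nat L HL) as EL.
  assert (Hz0 : 0 < z) by (unfold z, S1 in *; nra).
  assert (Hz1 : z <= IZR (2 ^ L)) by (unfold z, S1 in *; rewrite <- EL; nra).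
  split.
  - assert (IZR (- up (- z)) > -1) by lra. apply lt_IZR in H0. lia.
  - apply lt_IZR. lra.
Qed.

Lemma levelL_S1 L j : (0 <= L)%Z -> (0 <= j < 2 ^ L)%Z -> S1c (L, j).
Proof.
  intros HL Hj y Hy. unfold std, lev, idx in Hy; cbn [fst snd] in Hy.
  rewrite (p2_nat L HL) in Hy. pose proof (pow2_pos L HL).
  assert (0 <= IZR j) by (apply IZR_le; lia).
  assert (IZR j + 1 <= IZR (2 ^ L)) by (rewrite <- plus_IZR; apply IZR_le; lia).
  assert (0 < IZR (2 ^ L)) by (apply IZR_lt; lia).
  split.
  - destruct (Rle_dec y 0); [|lra]. nra.
  - destruct (Rle_dec y 1); [auto|]. nra.
Qed.

Lemma sub_trans a b c : sub a b -> sub b c -> sub a c.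
Proof. intros [H1 H2] [H3 H4]. split; [lia|]. intros y Hy; auto. Qed.

Section Inv.
Variable g gi : R -> R.
Hypothesis HgS1 : forall x, S1 x -> S1 (g x).
Hypothesis HgiS1 : forall y, S1 y -> S1 (gi y).
Hypothesis Hggi : forall y, S1 y -> g (gi y) = y.
Hypothesis Hgig : forall x, S1 x -> gi (g x) = x.

Lemma iter_S1 f t x : (forall x, S1 x -> S1 (f x)) -> S1 x -> S1 (Nat.iter t f x).
Proof. intros H Hx. induction t; simpl; auto. Qed.

Lemma iter_gh t y : S1 y -> Nat.iter t g (Nat.iter t gi y) = y.
Proof.
  revert y. induction t; intros y Hy; auto.
  change (Nat.iter (S t) g (gi (Nat.iter t gi y)) = y). rewrite iter_S', Hggi.
  apply IHt; auto. apply iter_S1; auto.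
Qed.

Lemma iter_hg t x : S1 x -> Nat.iter t gi (Nat.iter t g x) = x.
Proof.
  revert x. induction t; intros x Hx; auto.
  change (Nat.iter (S t) gi (g (Nat.iter t g x)) = x). rewrite iter_S', Hgig.
  apply IHt; auto. apply iter_S1; auto.
Qed.

Lemma iter_inj t x y : S1 x -> S1 y -> Nat.iter t g x = Nat.iter t g y -> x = y.
Proof.
  intros Hx Hy E. rewrite <- (iter_hg t x Hx), <- (iter_hg t y Hy), E. reflexivity.
Qed.

Definition good (c : code) := exists P, (1 <= P)%nat /\ forall y, std c y -> Nat.iter P g y = y.

Lemma good_back t c c' : AS (Nat.iter t g) c c' -> S1c c -> good c' -> good c.
Proof.
  intros HA Hc [P [HP HQ]]. exists P. split; auto. intros y Hy.
  apply (iter_inj t); auto. apply iter_S1; auto.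
  rewrite iter_comm. apply HQ. apply (AS_into _ _ _ _ HA Hy).
Qed.

End Inv.

Theorem lemma4p2 (g : R -> R) :
  in_V g -> infinite_order g ->
  exists U : R -> Prop, S1_open U /\ (exists x, U x) /\ wandering g U.
Proof.
  intros HV Hinf.
  destruct (classic (exists U : R -> Prop, S1_open U /\ (exists x, U x) /\ wandering g U)) as [H|Hno]; [exact H|exfalso].
  assert (NW : forall al be, al < be -> (forall y, al < y < be -> S1 y) ->
     (forall i y, (1 <= i)%nat -> al < y < be -> al < Nat.iter i g y < be -> False) -> False)
    by (intros al be H1 H2 H3; apply Hno, (wand_of g al be H1 H2 H3)).
  destruct (step_exists g HV) as [L [HL0 Hstep]].
  destruct HV as [HgS1 [Hinj [Hsurj _]]].
  destruct (choice_fun (fun y x => S1 y -> S1 x /\ g x = y)) as [gi Hgi].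
  { intros y. destruct (classic (S1 y)) as [Hy|Hy].
    - destruct (Hsurj y Hy) as [x Hx]. exists x; auto.
    - exists y; intros; contradiction. }
  assert (HgiS1 : forall y, S1 y -> S1 (gi y)) by (intros y Hy; apply (Hgi y Hy)).
  assert (Hggi : forall y, S1 y -> g (gi y) = y) by (intros y Hy; apply (Hgi y Hy)).
  assert (Hgig : forall x, S1 x -> gi (g x) = x).
  { intros x Hx. apply Hinj; auto. }
  destruct (choice_fun (fun c c' => (L <= lev c)%Z -> S1c c -> AS g c c' /\ S1c c')) as [nx Hnx].
  { intros c. destruct (classic ((L <= lev c)%Z /\ S1c c)) as [[H1 H2]|H].
    - destruct (Hstep c H1 H2) as [c' Hc']. exists c'; auto.
    - exists c. intros H1 H2; exfalso; auto. }
  set (Ich := fun (J : code) (t : nat) => Nat.iter t nx J).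
  assert (Hchain : forall J t, S1c J -> (forall s, (s < t)%nat -> (L <= lev (Ich J s))%Z) ->
      (forall s, (s < t)%nat -> AS g (Ich J s) (Ich J (S s))) /\ (forall s, (s <= t)%nat -> S1c (Ich J s))).
  { intros J t HJ. induction t; intros Hl.
    - split; [intros; lia|]. intros s Hs. replace s with 0%nat by lia. exact HJ.
    - destruct IHt as [IH1 IH2]. { intros s Hs; apply Hl; lia. }
      assert (HA : AS g (Ich J t) (Ich J (S t)) /\ S1c (Ich J (S t))).
      { apply Hnx. apply Hl; lia. apply IH2; lia. }
      split.
      + intros s Hs. destruct (Nat.eq_dec s t) as [->|Hne]; [apply HA|apply IH1; lia].
      + intros s Hs. destruct (Nat.eq_dec s (S t)) as [->|Hne]; [apply HA|apply IH2; lia]. }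
  set (valid := fun j => (0 <= j < 2 ^ L)%Z).
  set (N := Z.to_nat (2 ^ L)).
  assert (HN : Z.of_nat N = (2 ^ L)%Z).
  { unfold N; rewrite Z2Nat.id; [auto| pose proof (pow2_pos L HL0); lia]. }
  set (Exit := fun J tau => (1 <= tau)%nat /\ (forall s, (s < tau)%nat -> (L <= lev (Ich J s))%Z)
                              /\ (lev (Ich J tau) < L)%Z).
  assert (Hbad : forall j, valid j -> ~ good g (L, j) -> exists j', valid j' /\ ~ good g (L, j') /\
                   exists tau, Exit (L, j) tau /\ sub (L, j') (Ich (L, j) tau)).
  { intros j Hj Hb. set (J := (L, j)).
    assert (HJ : S1c J) by (apply levelL_S1; auto).
    destruct (classic (exists t, (lev (Ich J t) < L)%Z)) as [Hex|Hall].
    - destruct (min_nat _ Hex) as [tau [Htau Hmin]].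
      assert (Htau1 : (1 <= tau)%nat).
      { destruct tau; [|lia]. simpl in Htau. unfold J, lev in Htau; simpl in Htau. lia. }
      assert (Hl : forall s, (s < tau)%nat -> (L <= lev (Ich J s))%Z).
      { intros s Hs. specialize (Hmin s Hs). lia. }
      destruct (Hchain J tau HJ Hl) as [HC1 HC2].
      assert (HAK : AS (Nat.iter tau g) J (Ich J tau)).
      { apply (AS_chain g (Ich J) 0 tau). intros s Hs. apply HC1; lia. }
      set (K := Ich J tau) in *.
      assert (HK : S1c K) by (apply HC2; lia).
      assert (Kbad : ~ good g K).
      { intro HgK; apply Hb, (good_back g gi HgS1 Hgig tau J K); auto. }
      destruct (classic (exists j', valid j' /\ ~ good g (L, j') /\ sub (L, j') K)) as [[j' [H1 [H2 H3]]]|Hno2].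
      + exists j'. split; auto. split; auto. exists tau. split; auto. unfold Exit. split; [lia|split; auto].
      + exfalso. apply Kbad.
        destruct (common_period (fun i P => setsub (L, Z.of_nat i) K -> forall y, std (L, Z.of_nat i) y -> Nat.iter P g y = y) N)
          as [P [HP HQ]].
        { intros i P m H H1 y Hy. apply iter_mult. apply H; auto. }
        { intros i Hi. destruct (classic (setsub (L, Z.of_nat i) K)) as [Hs|Hs].
          - destruct (classic (good g (L, Z.of_nat i))) as [[P [HP HQ]]|Hng].
            + exists P. split; auto.
            + exfalso. apply Hno2. exists (Z.of_nat i). split; [unfold valid; lia|]. split; auto.
              split; auto. change (lev K <= L)%Z. lia.
          - exists 1%nat. split; [lia|]. intros Hs'; contradiction. }
        exists P. split; auto. intros y Hy.
        destruct (levelL_decomp L y HL0 (HK y Hy)) as [j1 [Hj1 Hs1]].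
        assert (Hsub : setsub (L, j1) K).
        { apply (nest K (L, j1) y Hy Hs1). unfold lev at 2; simpl; lia. }
        apply (HQ (Z.to_nat j1)).
        * lia.
        * rewrite Z2Nat.id by lia. exact Hsub.
        * rewrite Z2Nat.id by lia. exact Hs1.
    - exfalso.
      assert (Hl : forall s, (L <= lev (Ich J s))%Z).
      { intros s; destruct (Z_lt_le_dec (lev (Ich J s)) L); [exfalso; apply Hall; eauto|auto]. }
      assert (HA : forall t, AS g (Ich J t) (Ich J (S t))).
      { intros t. apply (Hchain J (S t) HJ); [intros; apply Hl|lia]. }
      assert (HS : forall t y, std (Ich J t) y -> S1 y).
      { intros t. apply (Hchain J t HJ); [intros; apply Hl|lia]. }
      destruct (core g (Ich J) HA HS) as [[al [be [H1 [H2 H3]]]]|[n [d [Hd E]]]].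
      + apply (NW al be); auto.
      + apply Hb. apply (good_back g gi HgS1 Hgig n J (Ich J n)); auto.
        * apply (AS_chain g (Ich J) 0 n). intros; auto.
        * exists d. split; auto. intros y Hy.
          pose proof (AS_chain g (Ich J) n d (fun s _ => HA s)) as HAd.
          rewrite <- E in HAd. apply (AS_id _ _ _ HAd Hy). }
  assert (Hex0 : exists j0, valid j0 /\ ~ good g (L, j0)).
  { apply NNPP. intros Hall.
    destruct (common_period (fun i P => forall y, std (L, Z.of_nat i) y -> Nat.iter P g y = y) N) as [P [HP HQ]].
    { intros i P m H y Hy. apply iter_mult, H, Hy. }
    { intros i Hi. destruct (classic (good g (L, Z.of_nat i))) as [[P [HP HQ]]|Hng].
      - exists P; auto.
      - exfalso. apply Hall. exists (Z.of_nat i). split; [unfold valid; lia|auto]. }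
    destruct (Hinf P HP) as [x [Hx Hne]]. apply Hne.
    destruct (levelL_decomp L x HL0 Hx) as [j1 [Hj1 Hs1]].
    apply (HQ (Z.to_nat j1)); [lia|]. rewrite Z2Nat.id by lia. exact Hs1. }
  destruct Hex0 as [j0 [Hj0v Hj0b]].
  destruct (choice_fun (fun j j' => valid j /\ ~ good g (L, j) -> valid j' /\ ~ good g (L, j') /\
                   exists tau, Exit (L, j) tau /\ sub (L, j') (Ich (L, j) tau))) as [hs Hhs].
  { intros j. destruct (classic (valid j /\ ~ good g (L, j))) as [[H1 H2]|H].
    - destruct (Hbad j H1 H2) as [j' Hj']. exists j'; auto.
    - exists j; intros; contradiction. }
  assert (Hseq : forall t, valid (Nat.iter t hs j0) /\ ~ good g (L, Nat.iter t hs j0)).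
  { induction t; simpl; auto. destruct (Hhs _ IHt) as [H1 [H2 _]]; auto. }
  destruct (pigeon N (fun t => Nat.iter t hs j0)) as [a [b [Hab Eab]]].
  { intros t Ht. rewrite HN. apply Hseq. }
  cbv beta in Eab.
  set (ja := Nat.iter a hs j0).
  set (C := fun j => exists t, j = Nat.iter t hs ja).
  assert (HCv : forall j, C j -> valid j /\ ~ good g (L, j)).
  { intros j [t ->]. unfold ja. rewrite <- Nat.iter_add. apply Hseq. }
  assert (E2 : Nat.iter (b - a) hs ja = ja).
  { unfold ja. rewrite <- Nat.iter_add. replace (b - a + a)%nat with b by lia. symmetry; exact Eab. }
  assert (HCp : forall j, C j -> exists j'', C j'' /\ j = hs j'').
  { intros j [t ->]. destruct t.
    - exists (Nat.iter (b - a - 1) hs ja). split; [exists (b - a - 1)%nat; reflexivity|].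
      change (Nat.iter 0 hs ja) with ja. set (m := (b - a - 1)%nat).
      assert (Em : (b - a)%nat = S m) by (unfold m; lia). rewrite Em in E2.
      rewrite <- E2 at 1. reflexivity.
    - exists (Nat.iter t hs ja). split; [exists t; reflexivity|reflexivity]. }
  set (Ch := fun c => exists j tau s, C j /\ Exit (L, j) tau /\ (1 <= s <= tau)%nat /\ sub c (Ich (L, j) s)).
  assert (HChS1 : forall c, Ch c -> S1c c).
  { intros c [j [tau [s [HC [[Ht1 [Ht2 Ht3]] [Hs Hsub]]]]]] y Hy.
    destruct (Hchain (L, j) tau (levelL_S1 L j HL0 (proj1 (HCv j HC))) Ht2) as [_ H2].
    apply (H2 s ltac:(lia)). apply Hsub, Hy. }
  assert (HChstep : forall c, Ch c -> exists c', AS gi c c' /\ Ch c').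
  { intros c [j [tau [s [HC [[Ht1 [Ht2 Ht3]] [Hs Hsub]]]]]].
    destruct (Hchain (L, j) tau (levelL_S1 L j HL0 (proj1 (HCv j HC))) Ht2) as [H1 H2].
    assert (HA : AS g (Ich (L, j) (s - 1)%nat) (Ich (L, j) s)).
    { replace s with (S (s - 1)) at 2 by lia. apply H1; lia. }
    assert (HAi : AS gi (Ich (L, j) s) (Ich (L, j) (s - 1)%nat)).
    { apply (AS_inv g gi _ _ HA). intros x Hx. apply Hgig. apply (H2 (s - 1)%nat ltac:(lia)), Hx. }
    destruct (AS_sub _ _ _ _ HAi Hsub) as [c' [Hc'1 Hc'2]].
    exists c'. split; auto.
    destruct (Nat.eq_dec s 1) as [->|Hs1].
    - destruct (HCp j HC) as [j'' [HC'' Ej]].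
      destruct (Hhs j'' (HCv j'' HC'')) as [_ [_ [tau'' [Hex'' Hsub'']]]].
      exists j'', tau'', tau''. split; auto. split; auto. split; [destruct Hex''; lia|].
      change (Ich (L, j) (1 - 1)%nat) with (L, j) in Hc'2.
      apply (sub_trans _ (L, j)); auto. rewrite Ej. exact Hsub''.
    - exists j, tau, (s - 1)%nat. split; auto. split; [split; auto|]. split; [lia|auto]. }
  destruct (choice_fun (fun c c' => Ch c -> AS gi c c' /\ Ch c')) as [pv Hpv].
  { intros c. destruct (classic (Ch c)) as [H|H].
    - destruct (HChstep c H) as [c' Hc']. exists c'; auto.
    - exists c; intros; contradiction. }
  set (B := fun t => Nat.iter t pv (L, ja)).
  assert (HB0 : Ch (L, ja)).
  { destruct (HCp ja (ex_intro _ 0%nat eq_refl)) as [j'' [HC'' Ej]].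
    destruct (Hhs j'' (HCv j'' HC'')) as [_ [_ [tau'' [Hex'' Hsub'']]]].
    exists j'', tau'', tau''. split; auto. split; auto. split; [destruct Hex''; lia|].
    rewrite Ej. exact Hsub''. }
  assert (HBch : forall t, Ch (B t)).
  { induction t; simpl; auto. apply (Hpv _ IHt). }
  assert (HBA : forall t, AS gi (B t) (B (S t))) by (intros t; apply (Hpv _ (HBch t))).
  assert (HBS : forall t y, std (B t) y -> S1 y) by (intros t; apply HChS1, HBch).
  destruct (core gi B HBA HBS) as [[al [be [H1 [H2 H3]]]]|[n [d [Hd E]]]].
  - apply (NW al be H1 H2). intros i y Hi Hy Hz.
    apply (H3 i (Nat.iter i g y) Hi Hz). rewrite (iter_hg g gi HgS1 Hgig i y (H2 y Hy)). exact Hy.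
  - apply (proj2 (HCv ja (ex_intro _ 0%nat eq_refl))).
    exists d. split; auto. intros y Hy.
    pose proof (AS_chain gi B 0 n (fun s _ => HBA s)) as HA0.
    pose proof (AS_chain gi B n d (fun s _ => HBA s)) as HAd. rewrite <- E in HAd.
    set (x := Nat.iter n gi y).
    assert (Hx : std (B n) x) by (apply (AS_into _ _ _ _ HA0); exact Hy).
    assert (HxS : S1 x) by (apply (HBS n x Hx)).
    assert (HyS : S1 y) by (apply (HBS 0%nat y Hy)).
    assert (Hxd' : Nat.iter d gi x = x) by (apply (AS_id _ _ _ HAd Hx)).
    assert (Hxd : Nat.iter d g x = x).
    { pose proof (iter_gh g gi HgiS1 Hggi d x HxS) as G. rewrite Hxd' in G. exact G. }
    rewrite <- (iter_gh g gi HgiS1 Hggi n y HyS). fold x.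
    rewrite iter_comm, Hxd. reflexivity.
Qed.
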